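(* The quotient map $\pi\colon\Pi_*\to\Pi_*/\mathbb{R}_+$ is a principal $\mathbb{R}_+$-bundle. That is, the $\mathbb{R}_+$-action on $\Pi_*$ is free, and whenever $\mathcal{P}_n\in\Pi_*$, $t_n\in\mathbb{R}_+$, $\mathcal{P}_n\to\mathcal{P}\in\Pi_*$ and $t_n\mathcal{P}_n\to t\mathcal{P}$ weakly, we have $t_n\to t$.
   Context: mm-spaces are triples $(X,d_X,\mu_X)$ with $(X,d_X)$ complete separable metric and $\mu_X$ a Borel probability measure, with $X=\operatorname{supp}\mu_X$. $\mathcal{X}$ is the set of their isomorphism classes under measure-preserving isometries of supports. Box distance: $\square(X,Y)$ is the infimum of $\varepsilon\ge0$ such that there exist Borel maps $\varphi,\psi$ from $[0,1)$ pushing Lebesgue measure to $\mu_X,\mu_Y$ and a Borel $I_0$ of measure $\ge1-\varepsilon$ with $|d_X(\varphi(s),\varphi(t))-d_Y(\psi(s),\psi(t))|\le\varepsilon$ on $I_0$. $Y\prec X$ means there is a 1-Lipschitz $f\colon X\to Y$ with $f_*\mu_X=\mu_Y$. A pyramid is a nonempty $\square$-closed subset of $\mathcal{X}$ that is downward closed under $\prec$ and such that any two elements are dominated by a common element. $\Pi$ is the set of pyramids. Weak convergence: $\mathcal{P}_n\to\mathcal{P}$ iff $\square(X,\mathcal{P}_n)\to0$ for $X\in\mathcal{P}$ and $\liminf\square(X,\mathcal{P}_n)>0$ for $X\notin\mathcal{P}$. $\mathbb{R}_+$ acts on $\Pi$ by $t\mathcal{P}=\{(X,t\,d_X,\mu_X):X\in\mathcal{P}\}$.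 $\Pi_*=\Pi\setminus\mathrm{Fix}(\Pi)$, with the quotient topology on $\Pi_*/\mathbb{R}_+$. A free action with quotient map $\pi$ is a principal $\mathbb{R}_+$-bundle if the translation function $\tau(e,e')$, defined for $\pi(e)=\pi(e')$ by $e'=\tau(e,e')e$, is continuous. *)

(* Defs.v *)
From HB Require Import structures.
From mathcomp Require Import all_boot all_order all_algebra.
From mathcomp Require Import all_classical all_reals all_analysis.
From mathcomp Require Import Rstruct Rstruct_topology.
Set Implicit Arguments. Unset Strict Implicit. Unset Printing Implicit Defensive.
Import Order.TTheory GRing.Theory Num.Theory.
Local Open Scope classical_set_scope.
Local Open Scope ring_scope.

Notation RR := Rdefinitions.R.

Definition is_metric (T : Type) (d : T -> T -> RR) : Prop :=
  (forall x y, 0 <= d x y) /\ (forall x y, d x y = 0 <-> x = y) /\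
  (forall x y, d x y = d y x) /\ (forall x y z, d x z <= d x y + d y z).

Definition dball (T : Type) (d : T -> T -> RR) (x : T) (r : RR) : set T :=
  [set y | d x y < r].

Definition d_open (T : Type) (d : T -> T -> RR) (U : set T) : Prop :=
  forall x, U x -> exists2 r : RR, 0 < r & dball d x r `<=` U.

Definition borel (T : Type) (d : T -> T -> RR) : set (set T) :=
  <<s d_open d >>.

Definition d_complete (T : Type) (d : T -> T -> RR) : Prop :=
  forall u : nat -> T,
    (forall e : RR, 0 < e -> exists N, forall m n, (N <= m)%N -> (N <= n)%N ->
        d (u m) (u n) < e) ->
    exists x, forall e : RR, 0 < e -> exists N, forall n, (N <= n)%N -> d (u n) x < e.

Definition d_separable (T : Type) (d : T -> T -> RR) : Prop :=
  exists u : nat -> T, forall x (e : RR), 0 < e -> exists n, d x (u n) < e.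

Definition borel_probability (T : Type) (d : T -> T -> RR) (mu : set T -> \bar RR)
  : Prop :=
  mu set0 = 0%E /\ mu setT = 1%E /\
  (forall A, borel d A -> (0 <= mu A)%E) /\
  (forall F : nat -> set T, (forall n, borel d (F n)) -> trivIset setT F ->
     (fun n => \sum_(0 <= i < n) mu (F i))%E @ \oo --> mu (\bigcup_n F n)).

(* X = supp mu_X : every open ball of positive radius has positive measure *)
Definition full_support (T : Type) (d : T -> T -> RR) (mu : set T -> \bar RR) : Prop :=
  forall x (r : RR), 0 < r -> (0 < mu (dball d x r))%E.

Record mmspace := MMSpace {
  mm_T :> Type;
  mm_d : mm_T -> mm_T -> RR;
  mm_mu : set mm_T -> \bar RR;
  mm_metric : is_metric mm_d;
  mm_complete : d_complete mm_d;
  mm_separable : d_separable mm_d;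
  mm_prob : borel_probability mm_d mm_mu;
  mm_supp : full_support mm_d mm_mu
}.
Arguments mm_d : clear implicits.
Arguments mm_mu : clear implicits.

Definition pushes (X Y : mmspace) (f : X -> Y) : Prop :=
  forall A, borel (mm_d Y) A -> mm_mu X (f @^-1` A) = mm_mu Y A.

(* Z is isomorphic to t X (X with metric t d_X), via a measure-preserving
   surjective isometry; for t = 1 this is mm-isomorphism. *)
Definition scaled_iso (t : RR) (X Z : mmspace) : Prop :=
  exists f : X -> Z, (forall x y, mm_d Z (f x) (f y) = t * mm_d X x y) /\
    (forall z, exists x, f x = z) /\ pushes f.

Definition I01 : set RR := `[0, 1[%classic.

Definition parameter (X : mmspace) (phi : RR -> X) : Prop :=
  forall A, borel (mm_d X) A ->
    @measurable _ (measurableTypeR RR) (I01 `&` phi @^-1` A) /\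
    lebesgue_measure (I01 `&` phi @^-1` A) = mm_mu X A.

Definition box_ok (X Y : mmspace) (e : RR) : Prop :=
  exists (phi : RR -> X) (psi : RR -> Y) (I0 : set RR),
    parameter phi /\ parameter psi /\
    @measurable _ (measurableTypeR RR) I0 /\ I0 `<=` I01 /\ ((1 - e)%:E <= lebesgue_measure I0)%E /\
    forall s t, I0 s -> I0 t ->
      `| mm_d X (phi s) (phi t) - mm_d Y (psi s) (psi t) | <= e.

Definition box (X Y : mmspace) : RR := inf [set e : RR | 0 <= e /\ box_ok X Y e].

Definition dominated (Y X : mmspace) : Prop :=
  exists f : X -> Y, (forall x x', mm_d Y (f x) (f x') <= mm_d X x x') /\ pushes f.

Definition box_set (X : mmspace) (P : set mmspace) : RR :=
  inf [set box X Y | Y in P].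

Definition box_closed (P : set mmspace) : Prop :=
  forall X, (forall e : RR, 0 < e -> exists2 Y, P Y & box X Y < e) -> P X.

Definition pyramid (P : set mmspace) : Prop :=
  (exists X, P X) /\ box_closed P /\
  (forall X Y, P X -> dominated Y X -> P Y) /\
  (forall X X', P X -> P X' -> exists2 Y, P Y & dominated X Y /\ dominated X' Y).

Definition wcvg (Pn : nat -> set mmspace) (P : set mmspace) : Prop :=
  (forall X, P X -> (fun n => box_set X (Pn n)) @ \oo --> (0 : RR)) /\
  (forall X, ~ P X -> 0 < limn_inf (fun n => box_set X (Pn n))).

Definition pscale (t : RR) (P : set mmspace) : set mmspace :=
  [set Z | exists2 X, P X & scaled_iso t X Z].

Definition fixed_pyramid (P : set mmspace) : Prop :=
  forall t : RR, 0 < t -> pscale t P = P.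

Definition Pi_star (P : set mmspace) : Prop := pyramid P /\ ~ fixed_pyramid P.

(* Main.v *)
Require Import Defs.
From HB Require Import structures.
From mathcomp Require Import all_boot all_order all_algebra.
From mathcomp Require Import all_classical all_reals all_analysis.
From mathcomp Require Import Rstruct Rstruct_topology.
From mathcomp Require Import lra.
Import Order.TTheory GRing.Theory Num.Theory.
Local Open Scope classical_set_scope.
Local Open Scope ring_scope.
Set Implicit Arguments. Unset Strict Implicit.

Section Scale.
Variables (T : Type) (d : T -> T -> RR) (c : RR).
Hypothesis hc : 0 < c.
Let sd := fun x y => c * d x y.

Lemma lt_scale a b : (c * a < b) = (a < b / c).
Proof. by rewrite ltr_pdivlMr // mulrC. Qed.

Lemma dball_scale x r : dball sd x r = dball d x (r / c).
Proof. by rewrite /dball /sd; apply/seteqP; split => y /=; rewrite lt_scale. Qed.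

Lemma d_open_scale : d_open sd = d_open d.
Proof.
rewrite /d_open funeqE => U; apply/propext; split => h x Ux.
  have [r r0 hr] := h x Ux; exists (r / c); first by rewrite divr_gt0.
  by rewrite -dball_scale.
have [r r0 hr] := h x Ux; exists (r * c); first by rewrite mulr_gt0.
by rewrite dball_scale mulrK // unitfE gt_eqF.
Qed.

Lemma borel_scale : borel sd = borel d.
Proof. by rewrite /borel d_open_scale. Qed.

Lemma metric_scale : is_metric d -> is_metric sd.
Proof.
move=> [h0 [h1 [h2 h3]]]; rewrite /sd; split; [|split; [|split]].
- by move=> x y; rewrite mulr_ge0 // ltW.
- move=> x y; rewrite -h1; split; last by move=> ->; rewrite mulr0.
  by move/eqP; rewrite mulf_eq0 gt_eqF //= => /eqP.
- by move=> x y; rewrite h2.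
- by move=> x y z; rewrite -mulrDr ler_wpM2l // ltW.
Qed.

Lemma complete_scale : d_complete d -> d_complete sd.
Proof.
move=> h u hu; have [x hx] : exists x, forall e : RR, 0 < e -> exists N, forall n, (N <= n)%N -> d (u n) x < e.
  apply: h => e e0; have [N hN] := hu (c * e) (mulr_gt0 hc e0).
  by exists N => m n hm hn; move: (hN m n hm hn); rewrite /sd ltr_pM2l.
exists x => e e0; have [N hN] := hx (e / c) (divr_gt0 e0 hc).
by exists N => n hn; rewrite /sd lt_scale; apply: hN.
Qed.

Lemma separable_scale : d_separable d -> d_separable sd.
Proof.
move=> [u hu]; exists u => x e e0; have [n hn] := hu x (e / c) (divr_gt0 e0 hc).
by exists n; rewrite /sd lt_scale.
Qed.

Lemma prob_scale mu : borel_probability d mu -> borel_probability sd mu.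
Proof. by rewrite /borel_probability borel_scale. Qed.

Lemma supp_scale mu : full_support d mu -> full_support sd mu.
Proof.
move=> h x r r0; rewrite dball_scale; apply: h; by rewrite divr_gt0.
Qed.
End Scale.

Definition mscale (c : RR) (hc : 0 < c) (X : mmspace) : mmspace :=
  @MMSpace (mm_T X) (fun x y => c * mm_d X x y) (mm_mu X)
    (@metric_scale _ (mm_d X) c hc (@mm_metric X))
    (@complete_scale _ (mm_d X) c hc (@mm_complete X))
    (@separable_scale _ (mm_d X) c hc (@mm_separable X))
    (@prob_scale _ (mm_d X) c hc (mm_mu X) (@mm_prob X))
    (@supp_scale _ (mm_d X) c hc (mm_mu X) (@mm_supp X)).

Lemma borel_sigma T (d : T -> T -> RR) : sigma_algebra setT (borel d).
Proof. exact: smallest_sigma_algebra. Qed.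

Lemma borel_open T (d : T -> T -> RR) A : d_open d A -> borel d A.
Proof. by move=> h; apply: sub_sigma_algebra. Qed.

Lemma lip_borel T1 T2 (d1 : T1 -> T1 -> RR) (d2 : T2 -> T2 -> RR) (f : T1 -> T2) (K : RR) :
  0 < K -> (forall x y, d2 (f x) (f y) <= K * d1 x y) ->
  forall A, borel d2 A -> borel d1 (f @^-1` A).
Proof.
move=> K0 hf.
have [h0 hC hU] := borel_sigma d1.
apply: smallest_sub.
  split.
  - by rewrite /= preimage_set0.
  - move=> A /= hA; rewrite (_ : _ @^-1` _ = setT `\` f @^-1` A); first exact: hC.
    by apply/seteqP; split => x /=.
  - by move=> F hF /=; rewrite preimage_bigcup; apply: hU.
move=> A hA; apply: borel_open => x /= Ax.
have [r r0 hr] := hA (f x) Ax.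
exists (r / K); first by rewrite divr_gt0.
move=> y /= hy; apply: hr; rewrite /dball /=.
apply: le_lt_trans (hf x y) _; by rewrite mulrC -ltr_pdivlMr.
Qed.

Lemma pscale_mono a (P Q : set mmspace) : P `<=` Q -> pscale a P `<=` pscale a Q.
Proof. by move=> PQ Z [X PX h]; exists X => //; apply: PQ. Qed.

Definition dclosed (P : set mmspace) := forall X Y, P X -> dominated Y X -> P Y.

Lemma pscale_le1 (P : set mmspace) s : dclosed P -> 0 < s -> s <= 1 -> pscale s P `<=` P.
Proof.
move=> hP s0 s1 Z [X PX [f [hf [_ pf]]]]; apply: (hP X) => //.
exists f; split => // x y; rewrite hf.
have := (mm_metric X).1 x y => h.
by rewrite -[leRHS]mul1r ler_wpM2r.
Qed.

Lemma pscale_self (P : set mmspace) : P `<=` pscale 1 P.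
Proof.
move=> X PX; exists X => //; exists id; split => //; first by move=> x y; rewrite mul1r.
by split => // z; exists z.
Qed.

Lemma pscale_comp_sub a b (P : set mmspace) : 0 < a -> 0 < b ->
  pscale a (pscale b P) `<=` pscale (a * b) P.
Proof.
move=> a0 b0 Z [Y [X PX [f [hf [sf pf]]]] [g [hg [sg pg]]]].
exists X => //; exists (g \o f); split.
  by move=> x y /=; rewrite hg hf mulrA.
split.
  move=> z; have [y <-] := sg z; have [x <-] := sf y; by exists x.
move=> A hA; rewrite comp_preimage pf ?pg //.
apply: (@lip_borel _ _ (mm_d Y) (mm_d Z) g a) => // x y; by rewrite hg.
Qed.

Lemma pscale_comp_sup a b (P : set mmspace) (a0 : 0 < a) (b0 : 0 < b) :
  pscale (a * b) P `<=` pscale a (pscale b P).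
Proof.
move=> Z [X PX [f [hf [sf pf]]]].
exists (mscale b0 X).
  exists X => //; exists id; split => //; split => //; by move=> z; exists z.
exists f; split; first by move=> x y /=; rewrite hf mulrA.
by split.
Qed.

Lemma pscale_comp a b (P : set mmspace) : 0 < a -> 0 < b ->
  pscale a (pscale b P) = pscale (a * b) P.
Proof.
move=> a0 b0; apply/seteqP; split; [exact: pscale_comp_sub | exact: pscale_comp_sup].
Qed.

Lemma pscale1 (P : set mmspace) : dclosed P -> pscale 1 P = P.
Proof.
move=> h; apply/seteqP; split; [exact: pscale_le1 | exact: pscale_self].
Qed.

Lemma bernoulli_le (r : RR) n : 1 <= r -> 1 + n%:R * (r - 1) <= r ^+ n.
Proof.
move=> r1; elim: n => [|n ih]; first by rewrite mul0r addr0 expr0.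
rewrite exprS -natr1.
have h : 0 <= n%:R * (r - 1) :> RR by rewrite mulr_ge0 // subr_ge0.
have h2 : r * (1 + n%:R * (r - 1)) <= r * r ^+ n by rewrite ler_wpM2l // (le_trans ler01 r1).
apply: le_trans h2; nra.
Qed.

Lemma exp_large (r u : RR) : 1 < r -> exists n, u <= r ^+ n.
Proof.
move=> r1; have r1' : 0 < r - 1 by rewrite subr_gt0.
exists (Num.bound (`|u| / (r - 1))).
apply: le_trans (bernoulli_le _ (ltW r1)).
have := archi_boundP (divr_ge0 (normr_ge0 u) (ltW r1')).
rewrite ltr_pdivrMr // => h.
apply: le_trans (ler_norm u) _; apply: le_trans (ltW h) _; by rewrite lerDr.
Qed.

Lemma fixed_of_expand (P : set mmspace) r : pyramid P -> 1 < r ->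
  pscale r P `<=` P -> fixed_pyramid P.
Proof.
move=> hP r1 hr.
have dP : dclosed P by case: hP => _ [_ [h _]].
have r0 : 0 < r by apply: lt_trans r1.
have hn : forall n, pscale (r ^+ n) P `<=` P.
  elim=> [|n ih]; first by rewrite expr0; apply: pscale_le1.
  rewrite exprS; apply: subset_trans (@pscale_comp_sup r (r ^+ n) P r0 (exprn_gt0 n r0)) _.
  by apply: subset_trans (@pscale_mono r _ _ ih) hr.
have hu : forall u, 0 < u -> pscale u P `<=` P.
  move=> u u0; have [n hn'] := exp_large u r1.
  have rn0 : 0 < r ^+ n := exprn_gt0 n r0.
  have q0 : 0 < u / r ^+ n by rewrite divr_gt0.
  rewrite -[u](@divfK _ (r ^+ n)); last by rewrite gt_eqF.
  apply: subset_trans (@pscale_comp_sup _ _ P q0 rn0) _.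
  apply: subset_trans (@pscale_mono (u / r ^+ n) _ _ (hn n)) _.
  apply: pscale_le1 => //; by rewrite ler_pdivrMr // mul1r.
move=> t t0; apply/seteqP; split; first exact: hu.
move=> X PX.
have it0 : 0 < t^-1 by rewrite invr_gt0.
have hY : P (mscale it0 X).
  apply: (hu _ it0); exists X => //; exists id; split => //; split => //; by move=> z; exists z.
exists (mscale it0 X) => //; exists id; split.
  by move=> x y /=; rewrite mulrA mulfV ?mul1r // gt_eqF.
by split => // z; exists z.
Qed.

Lemma part1 (P : set mmspace) (t : RR) : Pi_star P -> 0 < t -> pscale t P = P -> t = 1.
Proof.
move=> [hP nf] t0 htP; have dP : dclosed P by case: hP => _ [_ [h _]].
case: (ltgtP t 1) => // ht.
- have it1 : 1 < t^-1 by rewrite invf_gt1.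
  have it0 : 0 < t^-1 by rewrite invr_gt0.
  exfalso; apply: nf; apply: (fixed_of_expand hP it1).
  rewrite -{1}htP; apply: subset_trans (@pscale_comp_sub _ _ P it0 t0) _.
  by rewrite mulVf ?gt_eqF // pscale1.
- by exfalso; apply: nf; apply: (fixed_of_expand hP ht); rewrite htP.
Qed.

Definition rparam (T : Type) (d : T -> T -> RR) (mu : set T -> \bar RR) (phi : RR -> T) : Prop :=
  forall A, borel d A ->
    @measurable _ (measurableTypeR RR) (I01 `&` phi @^-1` A) /\
    lebesgue_measure (I01 `&` phi @^-1` A) = mu A.

Definition rbox_ok T1 (d1 : T1 -> T1 -> RR) mu1 T2 (d2 : T2 -> T2 -> RR) mu2 (e : RR) : Prop :=
  exists (phi : RR -> T1) (psi : RR -> T2) (I0 : set RR),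
    rparam d1 mu1 phi /\ rparam d2 mu2 psi /\
    @measurable _ (measurableTypeR RR) I0 /\ I0 `<=` I01 /\ ((1 - e)%:E <= lebesgue_measure I0)%E /\
    forall s t, I0 s -> I0 t ->
      `| d1 (phi s) (phi t) - d2 (psi s) (psi t) | <= e.

Definition rbox T1 (d1 : T1 -> T1 -> RR) mu1 T2 (d2 : T2 -> T2 -> RR) mu2 : RR :=
  inf [set e : RR | 0 <= e /\ rbox_ok d1 mu1 d2 mu2 e].

Lemma boxE (X Y : mmspace) : box X Y = rbox (mm_d X) (mm_mu X) (mm_d Y) (mm_mu Y).
Proof. by []. Qed.

Lemma rparam_scale T (d d' : T -> T -> RR) mu phi a : 0 < a ->
  (forall x y, d' x y = a * d x y) -> rparam d mu phi -> rparam d' mu phi.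
Proof.
move=> a0 hd; have -> : d' = fun x y => a * d x y by apply/funext => x; apply/funext => y.
by rewrite /rparam borel_scale.
Qed.

Lemma rbox_ok_scale T1 T2 (d1 d1' : T1 -> T1 -> RR) mu1 (d2 d2' : T2 -> T2 -> RR) mu2 a e :
  0 < a -> (forall x y, d1' x y = a * d1 x y) -> (forall x y, d2' x y = a * d2 x y) ->
  0 <= e -> rbox_ok d1 mu1 d2 mu2 e -> rbox_ok d1' mu1 d2' mu2 (Num.max a 1 * e).
Proof.
move=> a0 h1 h2 e0 [phi [psi [I0 [p1 [p2 [mI [sI [lI hI]]]]]]]].
have Ke : e <= Num.max a 1 * e by rewrite ler_peMl // le_max lexx orbT.
exists phi, psi, I0; split; first exact: (rparam_scale a0 h1 p1).
split; first exact: (rparam_scale a0 h2 p2).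
split; first exact: mI.
split; first exact: sI.
split.
  apply: le_trans lI; rewrite lee_fin; by rewrite lerB.
move=> s t Is It; rewrite h1 h2 -mulrBr normrM gtr0_norm //.
apply: le_trans (ler_wpM2l (ltW a0) (hI s t Is It)) _.
by rewrite ler_wpM2r // le_max lexx.
Qed.

Section RBox.
Variables (T1 T2 : Type) (d1 : T1 -> T1 -> RR) (mu1 : set T1 -> \bar RR)
  (d2 : T2 -> T2 -> RR) (mu2 : set T2 -> \bar RR).

Lemma rbox_ge0 : 0 <= rbox d1 mu1 d2 mu2.
Proof.
rewrite /rbox; set S := [set e | _].
have [->|/set0P[e Se]] := eqVneq S set0; first by rewrite inf0.
  by apply: lb_le_inf; [exists e | move=> x []].
Qed.

Lemma rbox_le1 : rbox d1 mu1 d2 mu2 <= 1.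
Proof.
rewrite /rbox; set S := [set e | _].
have [->|/set0P[e Se]] := eqVneq S set0; first by rewrite inf0.
apply: ge_inf; first by exists 0 => x [].
split => //; case: Se => _ [phi [psi [I0 [p1 [p2 _]]]]].
exists phi, psi, set0; split => //; split => //; split; first exact: measurable0.
split => //; split; last by [].
by rewrite subrr measure0.
Qed.
End RBox.

Lemma rbox_scale_le T1 T2 (d1 d1' : T1 -> T1 -> RR) mu1 (d2 d2' : T2 -> T2 -> RR) mu2 a :
  0 < a -> (forall x y, d1' x y = a * d1 x y) -> (forall x y, d2' x y = a * d2 x y) ->
  rbox d1' mu1 d2' mu2 <= Num.max a 1 * rbox d1 mu1 d2 mu2.
Proof.
move=> a0 h1 h2.
have K0 : 0 < Num.max a 1 by rewrite lt_max ltr01 orbT.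
rewrite /rbox; set S := [set e | 0 <= e /\ rbox_ok d1 mu1 d2 mu2 e].
set S' := [set e | _].
have [S0|/set0P[e Se]] := eqVneq S set0.
  have -> : S' = set0.
    apply/seteqP; split => // e [e0 he].
    have ia : 0 < a^-1 by rewrite invr_gt0.
    suff : S (Num.max a^-1 1 * e) by rewrite S0.
    split; last apply: (rbox_ok_scale (a := a^-1)) he => //.
    - by rewrite mulr_ge0 // le_max ler01 orbT.
    - by move=> x y; rewrite h1 mulrA mulVf ?gt_eqF ?mul1r.
    - by move=> x y; rewrite h2 mulrA mulVf ?gt_eqF ?mul1r.
  by rewrite S0 !inf0 mulr0.
rewrite -ler_pdivrMl //; apply: lb_le_inf; first by exists e.
move=> x [x0 hx]; rewrite ler_pdivrMl //; apply: ge_inf; first by exists 0 => y [].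
split; first by rewrite mulr_ge0 // ltW.
exact: (rbox_ok_scale a0 h1 h2 x0 hx).
Qed.
Lemma liminf_pos (u : nat -> RR) : (forall n, 0 <= u n <= 1) ->
  0 < limn_inf u -> exists2 c : RR, 0 < c & exists N, forall n, (N <= n)%N -> c <= u n.
Proof.
move=> hu hc.
have bu : bounded_fun (u : nat -> RR^o).
  exists 1; split => // x x1 y _ /=.
  have /andP[h0 h1] := hu y.
  rewrite ger0_norm //; apply: le_trans h1 (ltW x1).
move: hc; rewrite limn_infE // => hc.
have [_ [n0 _ <-] hn0] := sup_gt (ex_intro _ (infs u 0) (ex_intro2 _ _ 0%N I erefl)) hc.
exists (infs u n0) => //; exists n0 => n hn.
apply: ge_inf; last by exists n.
exists 0 => _ [k _ <-]; by case/andP: (hu k).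
Qed.
Lemma freq_of (u : nat -> RR) (t : RR) : ~ (u @ \oo --> t) ->
  exists2 e : RR, 0 < e & forall N, exists n, (N <= n)%N /\ e <= `|t - u n|.
Proof.
move=> h; apply: contrapT => h1; apply: h; apply: (proj2 (@cvgrPdist_lt _ RR^o _ _ _ u t)) => e e0.
apply: contrapT => h2; apply: h1; exists e => // N.
apply: contrapT => h3; apply: h2; exists N => // n /= hn.
rewrite ltNge; apply/negP => h4; apply: h3; by exists n.
Qed.

Lemma ev_of (u : nat -> RR) : u @ \oo --> (0:RR) -> forall d : RR, 0 < d -> exists N, forall n, (N <= n)%N -> u n < d.
Proof.
move=> /(proj1 (@cvgrPdist_lt _ RR^o _ _ _ u 0)) h d d0; have [N _ hN] := h d d0.
exists N => n hn; have := hN n hn; rewrite sub0r normrN => h1.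
exact: le_lt_trans (ler_norm _) h1.
Qed.

Lemma box_ge0 (X Y : mmspace) : 0 <= box X Y.
Proof. by rewrite boxE; apply: rbox_ge0. Qed.

Lemma box_le1 (X Y : mmspace) : box X Y <= 1.
Proof. by rewrite boxE; apply: rbox_le1. Qed.

Lemma box_set_le (X : mmspace) (P : set mmspace) Y : P Y -> box_set X P <= box X Y.
Proof.
move=> PY; apply: ge_inf; last by exists Y.
by exists 0 => _ [Z _ <-]; apply: box_ge0.
Qed.

Lemma box_set_bnd (X : mmspace) (P : set mmspace) : P !=set0 -> 0 <= box_set X P <= 1.
Proof.
move=> [Y PY]; apply/andP; split.
  apply: lb_le_inf; first by exists (box X Y), Y.
  by move=> _ [Z _ <-]; apply: box_ge0.
by apply: le_trans (box_set_le X PY) (box_le1 X Y).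
Qed.

Lemma box_set_lt (X : mmspace) (P : set mmspace) d : P !=set0 -> box_set X P < d ->
  exists2 Y, P Y & box X Y < d.
Proof.
move=> [Y PY] h; have [_ [Z PZ <-] hz] := inf_lt (ex_intro _ (box X Y) (ex_intro2 _ _ Y PY erefl)) h.
by exists Z.
Qed.

Lemma pscale_ne (P : set mmspace) a : 0 < a -> P !=set0 -> pscale a P !=set0.
Proof.
move=> a0 [Y PY]; exists (mscale a0 Y); exists Y => //; exists id; split => //.
by split => // z; exists z.
Qed.

Lemma lemM (Qn : nat -> set mmspace) (Q R : set mmspace) (un : nat -> RR) (r : RR) :
  (forall n, dclosed (Qn n)) -> (forall n, Qn n !=set0) -> dclosed Q ->
  (forall n, 0 < un n) -> 0 < r ->
  (forall X, Q X -> (fun n => box_set X (Qn n)) @ \oo --> (0 : RR)) ->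
  (forall X, ~ R X -> 0 < limn_inf (fun n => box_set X (pscale (un n) (Qn n)))) ->
  (forall N, exists n, (N <= n)%N /\ r <= un n) ->
  pscale r Q `<=` R.
Proof.
move=> dQn neQn dQ un0 r0 hQ hR fr X [Y QY [f [hf [sf pf]]]].
have ir : 0 < r^-1 by rewrite invr_gt0.
set Y0 := mscale ir X.
have QY0 : Q Y0.
  apply: (dQ Y) => //; exists f; split.
    by move=> a b /=; rewrite hf mulrA mulVf ?mul1r ?gt_eqF.
  by move=> A hA; apply: pf; move: hA => /=; rewrite borel_scale.
case: (pselect (R X)) => // nRX; exfalso.
have bnd : forall n, 0 <= box_set X (pscale (un n) (Qn n)) <= 1.
  by move=> n; apply: box_set_bnd; apply: pscale_ne.
have [c c0 [N1 hN1]] := liminf_pos bnd (hR X nRX).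
set K := Num.max r 1.
have K0 : 0 < K by rewrite lt_max ltr01 orbT.
have [N2 hN2] := ev_of (hQ Y0 QY0) (divr_gt0 c0 K0).
have [n [hn rn]] := fr (maxn N1 N2).
have [Y' QY' hY'] := box_set_lt (neQn n) (hN2 n (leq_trans (leq_maxr _ _) hn)).
have q0 : 0 < r / un n by rewrite divr_gt0.
set W := mscale q0 Y'.
have QW : Qn n W.
  apply: (dQn n Y') => //; exists id; split => // x y /=.
  by rewrite ler_piMl // ?(mm_metric Y').1 // ler_pdivrMr // mul1r.
set Z := mscale r0 Y'.
have PZ : pscale (un n) (Qn n) Z.
  exists W => //; exists id; split.
    by move=> x y /=; rewrite mulrA [un n * _]mulrC divfK // gt_eqF.
  by split => // z; exists z.
have h1 := hN1 n (leq_trans (leq_maxl _ _) hn).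
have h2 := box_set_le X PZ.
have h3 : box X Z <= K * box Y0 Y'.
  rewrite !boxE; apply: rbox_scale_le => // x y /=.
  by rewrite mulrA mulfV ?mul1r ?gt_eqF.
have h4 : K * box Y0 Y' < c by rewrite mulrC -ltr_pdivlMr.
by move: (le_lt_trans (le_trans h1 (le_trans h2 h3)) h4); rewrite ltxx.
Qed.

Lemma lemM' (Qn : nat -> set mmspace) (Q R : set mmspace) (un : nat -> RR) (r : RR) :
  (forall n, dclosed (Qn n)) -> (forall n, Qn n !=set0) ->
  (forall n, 0 < un n) -> 0 < r ->
  (forall X, ~ Q X -> 0 < limn_inf (fun n => box_set X (Qn n))) ->
  (forall X, R X -> (fun n => box_set X (pscale (un n) (Qn n))) @ \oo --> (0 : RR)) ->
  (forall N, exists n, (N <= n)%N /\ un n <= r) ->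
  R `<=` pscale r Q.
Proof.
move=> dQn neQn un0 r0 hQ hR fr X RX.
have ir : 0 < r^-1 by rewrite invr_gt0.
set X0 := mscale ir X.
suff QX0 : Q X0.
  exists X0 => //; exists id; split.
    by move=> x y /=; rewrite mulrA mulfV ?mul1r ?gt_eqF.
  by split => // z; exists z.
case: (pselect (Q X0)) => // nQ; exfalso.
have bnd : forall n, 0 <= box_set X0 (Qn n) <= 1 by move=> n; apply: box_set_bnd.
have [c c0 [N1 hN1]] := liminf_pos bnd (hQ X0 nQ).
set K := Num.max r^-1 1.
have K0 : 0 < K by rewrite lt_max ltr01 orbT.
have [N2 hN2] := ev_of (hR X RX) (divr_gt0 c0 K0).
have [n [hn rn]] := fr (maxn N1 N2).
have [Z [W QW [g [hg [sg pg]]]] hZ] :=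
  box_set_lt (pscale_ne (un0 n) (neQn n)) (hN2 n (leq_trans (leq_maxr _ _) hn)).
set Z' := mscale ir Z.
have QZ' : Qn n Z'.
  apply: (dQn n W) => //; exists g; split.
    move=> a b /=; rewrite hg mulrA ler_piMl // ?(mm_metric W).1 //.
    by rewrite mulrC ler_pdivrMr // mul1r.
  by move=> A hA; apply: pg; move: hA => /=; rewrite borel_scale.
have h1 := hN1 n (leq_trans (leq_maxl _ _) hn).
have h2 := box_set_le X0 QZ'.
have h3 : box X0 Z' <= K * box X Z.
  by rewrite !boxE; apply: rbox_scale_le.
have h4 : K * box X Z < c by rewrite mulrC -ltr_pdivlMr.
by move: (le_lt_trans (le_trans h1 (le_trans h2 h3)) h4); rewrite ltxx.
Qed.

Theorem proposition3p11 :
  (forall (P : set mmspace) (t : RR), Pi_star P -> 0 < t -> pscale t P = P -> t = 1)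
  /\
  (forall (Pn : nat -> set mmspace) (tn : nat -> RR) (P : set mmspace) (t : RR),
     (forall n, Pi_star (Pn n)) -> (forall n, 0 < tn n) ->
     Pi_star P -> 0 < t ->
     wcvg Pn P ->
     wcvg (fun n => pscale (tn n) (Pn n)) (pscale t P) ->
     tn @ \oo --> t).
Proof.
split; first exact: part1.
move=> Pn tn P t hPn tn0 [hP nf] t0 [c1 c2] [c3 c4].
have dP : dclosed P by case: hP => _ [_ [h _]].
have dPn : forall n, dclosed (Pn n) by move=> n; case: (hPn n) => [[_ [_ [h _]]] _].
have nePn : forall n, Pn n !=set0 by move=> n; case: (hPn n) => [[h _] _].
apply: contrapT => ncv.
have [e e0 fr] := freq_of ncv.
have it0 : 0 < t^-1 by rewrite invr_gt0.
case: (pselect (forall N, exists n, (N <= n)%N /\ tn n <= t - e)) => [frA|nfrA].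
-
  have [n [_ hn]] := frA 0%N.
  have r0 : 0 < t - e by apply: lt_le_trans (tn0 n) hn.
  have sub := lemM' dPn nePn tn0 r0 c2 c3 frA.
  have ir : 0 < (t - e)^-1 by rewrite invr_gt0.
  apply: nf; apply: (@fixed_of_expand P ((t - e)^-1 * t) hP).
    by rewrite ltr_pdivlMl // mulr1 gtrBl.
  apply: subset_trans (@pscale_comp_sup _ _ P ir t0) _.
  apply: subset_trans (@pscale_mono _ _ _ sub) _.
  apply: subset_trans (@pscale_comp_sub _ _ P ir r0) _.
  by rewrite mulVf ?gt_eqF // pscale1.
-
  have frB : forall N, exists n, (N <= n)%N /\ t + e <= tn n.
    have [N0 hN0] : exists N0, forall n, (N0 <= n)%N -> ~ (tn n <= t - e).
      apply: contrapT => h; apply: nfrA => N; apply: contrapT => h2; apply: h.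
      exists N => n hn h3; apply: h2; by exists n.
    move=> N; have [n [hn he]] := fr (maxn N N0); exists n; split.
      exact: leq_trans (leq_maxl _ _) hn.
    have := hN0 n (leq_trans (leq_maxr _ _) hn).
    move: he; case: (lerP 0 (t - tn n)) => h.
      by rewrite ger0_norm // => h5 h6; exfalso; apply: h6; lra.
    by rewrite ltr0_norm // => h5 h6; lra.
  have r0 : 0 < t + e by rewrite addr_gt0.
  have sub := lemM dPn nePn dP tn0 r0 c1 c4 frB.
  apply: nf; apply: (@fixed_of_expand P (t^-1 * (t + e)) hP).
    by rewrite ltr_pdivlMl // mulr1 ltrDl.
  apply: subset_trans (@pscale_comp_sup _ _ P it0 r0) _.
  apply: subset_trans (@pscale_mono _ _ _ sub) _.
  apply: subset_trans (@pscale_comp_sub _ _ P it0 t0) _.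
  by rewrite mulVf ?gt_eqF // pscale1.
Qed.
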